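(* Let $\alpha$ and $\beta$ be a Riemannian metric and a 1-form on a two-dimensional manifold with $\beta\ne0$, $b^2<1$ in the upper-sign case and $b^2<1/2$ in the lower-sign case, such that $$r_{ij}=2\tau\{(1\pm2b^2)a_{ij}\mp3b_ib_j\}+\frac{3}{\pm1-b^2}(b_is_j+b_js_i)$$ for a scalar function $\tau$. Define $\tilde\alpha=\sqrt{\xi\alpha^2+\eta\beta^2}$ and $\tilde\beta=\beta$, where $$\xi=\frac{(1\mp b^2)^3}{(1\pm2b^2)^{3/2}},\qquad \eta=\frac{9}{8b^2}\Big\{(1\pm2b^2)^{3/2}-\frac{1\mp2b^2+4b^4}{(1\pm2b^2)^{3/2}}\Big\}.$$ Then $\tilde r_{ij}=\dfrac{2\tau(1\mp b^2)^2}{(1\pm2b^2)^{5/2}}\,\tilde a_{ij}$, where $\tilde a_{ij}$ are the coefficients of $\tilde\alpha^2$ and $\tilde r_{ij}$ is the symmetrized covariant derivative of $\beta$ with respect to $\tilde\alpha$; moreover $\|\beta\|_{\tilde\alpha}^2=\dfrac{b^2}{(1\pm2b^2)^{3/2}}$.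
   Context: For $\alpha=\sqrt{a_{ij}y^iy^j}$ and $\beta=b_iy^i$: $b^i=a^{ij}b_j$, $b=\|\beta\|_\alpha=\sqrt{a^{ij}b_ib_j}$; $b_{i|j}$ is the covariant derivative of $\beta$ w.r.t. the Levi-Civita connection of $\alpha$, $r_{ij}=\frac12(b_{i|j}+b_{j|i})$, $s_{ij}=\frac12(b_{i|j}-b_{j|i})$, $s_j=b^is_{ij}$. Analogous quantities with tildes are taken with respect to $\tilde\alpha$. Upper signs refer to one case and lower signs to the other throughout. *)

(* Defs.v *)
From Stdlib Require Import Reals Lra.
Open Scope R_scope.

Definition pt := (R * R)%type.
Inductive idx := X1 | X2.

Definition sum2 (f : idx -> R) : R := f X1 + f X2.

Definition shift (p : pt) (k : idx) (t : R) : pt :=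
  match k with
  | X1 => (fst p + t, snd p)
  | X2 => (fst p, snd p + t)
  end.

Definition has_partial (f : pt -> R) (k : idx) (p : pt) (v : R) : Prop :=
  derivable_pt_lim (fun t => f (shift p k t)) 0 v.

Definition is_open (U : pt -> Prop) : Prop :=
  forall p, U p -> exists d, 0 < d /\
    forall q, Rabs (fst q - fst p) < d -> Rabs (snd q - snd p) < d -> U q.

Definition partials2 (a : idx -> idx -> pt -> R) (da : idx -> idx -> idx -> pt -> R)
  (U : pt -> Prop) : Prop :=
  forall i j k p, U p -> has_partial (a i j) k p (da i j k p).

Definition partials1 (b : idx -> pt -> R) (db : idx -> idx -> pt -> R)
  (U : pt -> Prop) : Prop :=
  forall i j p, U p -> has_partial (b i) j p (db i j p).

Definition is_riemannian (a : idx -> idx -> pt -> R) (U : pt -> Prop) : Prop :=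
  forall p, U p ->
    (forall i j, a i j p = a j i p) /\
    (forall v : idx -> R, (v X1 <> 0 \/ v X2 <> 0) ->
       0 < sum2 (fun i => sum2 (fun j => a i j p * v i * v j))).

(* pointwise algebra: g = (a_ij), dg i j k = d_k a_ij, bv = (b_i), dbv i j = d_j b_i *)
Definition det2 (g : idx -> idx -> R) : R :=
  g X1 X1 * g X2 X2 - g X1 X2 * g X2 X1.

Definition inv2 (g : idx -> idx -> R) : idx -> idx -> R :=
  fun i j => match i, j with
  | X1, X1 => g X2 X2 / det2 g
  | X1, X2 => - g X1 X2 / det2 g
  | X2, X1 => - g X2 X1 / det2 g
  | X2, X2 => g X1 X1 / det2 g
  end.

Definition christoffel (g : idx -> idx -> R) (dg : idx -> idx -> idx -> R)
  (k i j : idx) : R :=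
  / 2 * sum2 (fun l => inv2 g k l * (dg l j i + dg i l j - dg i j l)).

Definition covd (g : idx -> idx -> R) (dg : idx -> idx -> idx -> R)
  (bv : idx -> R) (dbv : idx -> idx -> R) (i j : idx) : R :=
  dbv i j - sum2 (fun k => christoffel g dg k i j * bv k).

Definition rr g dg bv dbv (i j : idx) : R :=
  / 2 * (covd g dg bv dbv i j + covd g dg bv dbv j i).
Definition ss g dg bv dbv (i j : idx) : R :=
  / 2 * (covd g dg bv dbv i j - covd g dg bv dbv j i).

Definition bup (g : idx -> idx -> R) (bv : idx -> R) (i : idx) : R :=
  sum2 (fun j => inv2 g i j * bv j).

Definition bnorm2 (g : idx -> idx -> R) (bv : idx -> R) : R :=
  sum2 (fun i => bup g bv i * bv i).

Definition sj g dg bv dbv (j : idx) : R :=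
  sum2 (fun i => bup g bv i * ss g dg bv dbv i j).

Definition atp (a : idx -> idx -> pt -> R) (p : pt) : idx -> idx -> R :=
  fun i j => a i j p.
Definition datp (da : idx -> idx -> idx -> pt -> R) (p : pt) : idx -> idx -> idx -> R :=
  fun i j k => da i j k p.
Definition batp (b : idx -> pt -> R) (p : pt) : idx -> R := fun i => b i p.
Definition dbatp (db : idx -> idx -> pt -> R) (p : pt) : idx -> idx -> R :=
  fun i j => db i j p.

(* eps = 1 : upper sign, eps = -1 : lower sign; x stands for b^2 *)
Definition xi (eps x : R) : R :=
  (1 - eps * x) ^ 3 / Rpower (1 + 2 * eps * x) (3 / 2).
Definition eta (eps x : R) : R :=
  9 / (8 * x) * (Rpower (1 + 2 * eps * x) (3 / 2)
                 - (1 - 2 * eps * x + 4 * x ^ 2) / Rpower (1 + 2 * eps * x) (3 / 2)).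

Definition atilde (eps : R) (a : idx -> idx -> pt -> R) (b : idx -> pt -> R) :
  idx -> idx -> pt -> R :=
  fun i j p =>
    let x := bnorm2 (atp a p) (batp b p) in
    xi eps x * a i j p + eta eps x * b i p * b j p.

(* Main.v *)
Require Import Defs.
From Stdlib Require Import Reals Lra.
From Coquelicot Require Import Coquelicot.
Open Scope R_scope.


Definition Tc (d : idx -> idx -> idx -> R) (l i j : idx) : R := d l j i + d i l j - d i j l.
Definition dXi (eps x : R) : R :=
  -3*eps*(1-eps*x)^2 / Rpower (1+2*eps*x) (3/2)
  - (1-eps*x)^3 * (3*eps/(1+2*eps*x)) / Rpower (1+2*eps*x) (3/2).
Definition dEta (eps x : R) : R :=
  -9/(8*x^2) * (Rpower (1+2*eps*x) (3/2) - (1-2*eps*x+4*x^2)/Rpower (1+2*eps*x) (3/2))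
  + 9/(8*x) * (3*eps/(1+2*eps*x) * Rpower (1+2*eps*x) (3/2)
     - ((-2*eps+8*x) * Rpower (1+2*eps*x) (3/2)
        - (1-2*eps*x+4*x^2) * (3*eps/(1+2*eps*x) * Rpower (1+2*eps*x) (3/2)))
       / (Rpower (1+2*eps*x) (3/2))^2).

Lemma Rpower32 y : 0 < y -> Rpower y (3/2) = y * sqrt y.
Proof. intros hy. replace (3/2) with (1 + /2) by field.
  rewrite Rpower_plus, Rpower_1, Rpower_sqrt; auto. Qed.
Lemma Rpower52 y : 0 < y -> Rpower y (5/2) = y * y * sqrt y.
Proof. intros hy. replace (5/2) with (1 + 1 + /2) by field.
  rewrite !Rpower_plus, Rpower_1, Rpower_sqrt; auto. Qed.

Lemma scalar (eps x tau : R) :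
  (eps = 1 /\ 0 < x < 1) \/ (eps = -1 /\ 0 < x < 1/2) ->
  let X := xi eps x in let Y := eta eps x in let Xp := dXi eps x in let Yp := dEta eps x in
  let Q := / (X + Y * x) in
  let c := 2 * tau * (1 - eps * x) ^ 2 / Rpower (1 + 2 * eps * x) (5 / 2) in
  X + Y * x = Rpower (1 + 2 * eps * x) (3/2) /\ X <> 0 /\ eps - x <> 0 /\
  ((1 - Q*Y*x)*2*tau*(1+2*eps*x) + 2*Q*tau*(1-eps*x)*x*Xp) = c * X /\
  ((1-Q*Y*x)*(-6*eps*tau) - 4*Q*tau*(1-eps*x)*(Xp+Yp*x) + 2*Q*tau*(1-eps*x)*x*Yp) = c * Y /\
  ((1-Q*Y*x)*3/(eps-x) - Q*(eps+2*x)/(eps-x)*(Xp+Yp*x) - Q*Y) = 0.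
Proof.
  intros H X Y Xp Yp Q c.
  assert (hy : 0 < 1 + 2*eps*x) by (destruct H as [[-> ?]|[-> ?]]; lra).
  assert (hS := sqrt_lt_R0 _ hy). assert (hSS := sqrt_sqrt _ (Rlt_le _ _ hy)).
  assert (hK : X + Y * x = Rpower (1 + 2 * eps * x) (3/2)).
  { unfold X, Y, xi, eta. rewrite !Rpower32 by exact hy.
    set (S := sqrt (1 + 2*eps*x)) in *. clearbody S.
    destruct H as [[-> [h1 h2]]|[-> [h1 h2]]].
    - assert (hx : x = (S*S-1)/2) by lra. subst x. field. lra.
    - assert (hx : x = (1 - S*S)/2) by lra. subst x. field. lra. }
  unfold Q. rewrite hK. clear Q hK.
  unfold c, X, Y, Xp, Yp, xi, eta, dXi, dEta.
  rewrite Rpower52, !Rpower32 by exact hy.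
  set (S := sqrt (1 + 2*eps*x)) in *. clearbody S.
  destruct H as [[-> [h1 h2]]|[-> [h1 h2]]].
  - assert (hx : x = (S*S-1)/2) by lra. subst x.
    assert (S*S > 1) by lra. assert (S * S < 3) by lra.
    assert (S <> 0) by lra. assert (S*S - 1 <> 0) by lra. assert (3 - S*S <> 0) by lra.
    refine (conj _ (conj _ (conj _ (conj _ (conj _ _))))).
    2: { apply Rmult_integral_contrapositive_currified. apply pow_nonzero. lra.
         apply Rinv_neq_0_compat. apply Rmult_integral_contrapositive_currified; lra. }
    2: lra.
    all: try (field; repeat split; nra).
  - assert (hx : x = (1 - S*S)/2) by lra. subst x.
    assert (S*S < 1) by lra. assert (S * S > 0) by lra.
    assert (S <> 0) by lra. assert (S*S - 1 <> 0) by lra. assert (3 - S*S <> 0) by lra.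
    refine (conj _ (conj _ (conj _ (conj _ (conj _ _))))).
    2: { apply Rmult_integral_contrapositive_currified. apply pow_nonzero. lra.
         apply Rinv_neq_0_compat. apply Rmult_integral_contrapositive_currified; lra. }
    2: lra.
    all: try (field; repeat split; nra).
Qed.
Lemma D_xi eps x : 0 < 1 + 2*eps*x -> is_derive (xi eps) x (dXi eps x).
Proof.
  intros hy. unfold xi, dXi, Rpower. auto_derive.
  - repeat split; first [lra | apply Rgt_not_eq, exp_pos].
  - field. repeat split; first [lra | apply Rgt_not_eq, exp_pos].
Qed.

Lemma D_eta eps x : 0 < 1 + 2*eps*x -> x <> 0 -> is_derive (eta eps) x (dEta eps x).
Proof.
  intros hy hx. unfold eta, dEta, Rpower. auto_derive.
  - repeat split; first [lra | apply Rgt_not_eq, exp_pos].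
  - field. repeat split; first [lra | apply Rgt_not_eq, exp_pos].
Qed.
Definition dxf (g : idx -> idx -> R) (dg : idx -> idx -> idx -> R) (bv : idx -> R)
  (dbv : idx -> idx -> R) (k : idx) : R :=
  - sum2 (fun i => sum2 (fun j => bup g bv i * bup g bv j * dg i j k))
  + 2 * sum2 (fun i => bup g bv i * dbv i k).

Lemma deriv_bnorm (A : idx -> idx -> R -> R) (B : idx -> R -> R)
  (dA : idx -> idx -> idx -> R) (dB : idx -> idx -> R) k t0 :
  (forall i j, is_derive (A i j) t0 (dA i j k)) -> (forall i, is_derive (B i) t0 (dB i k)) ->
  A X2 X1 t0 = A X1 X2 t0 -> det2 (fun i j => A i j t0) <> 0 ->
  is_derive (fun t => bnorm2 (fun i j => A i j t) (fun i => B i t)) t0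
    (dxf (fun i j => A i j t0) dA (fun i => B i t0) dB k).
Proof.
  intros hA hB hs hd.
  unfold dxf, bnorm2, bup, inv2, det2, sum2. unfold det2 in hd. cbv beta.
  auto_derive.
  - repeat split; first [ exact (ex_intro _ _ (hA _ _)) | exact (ex_intro _ _ (hB _)) | (intro E; apply hd; rewrite <- E; ring) ].
  - rewrite !(is_derive_unique _ _ _ (hA _ _)), !(is_derive_unique _ _ _ (hB _)).
    rewrite hs in *. field. exact hd.
Qed.

Lemma deriv_at (eps : R) (Xf Aij Bi Bj : R -> R) dX dA dBi dBj t0 :
  is_derive Xf t0 dX -> is_derive Aij t0 dA -> is_derive Bi t0 dBi -> is_derive Bj t0 dBj ->
  is_derive (xi eps) (Xf t0) (dXi eps (Xf t0)) -> is_derive (eta eps) (Xf t0) (dEta eps (Xf t0)) ->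
  is_derive (fun t => xi eps (Xf t) * Aij t + eta eps (Xf t) * Bi t * Bj t) t0
   (dXi eps (Xf t0) * dX * Aij t0 + xi eps (Xf t0) * dA
    + dEta eps (Xf t0) * dX * Bi t0 * Bj t0 + eta eps (Xf t0) * (dBi * Bj t0 + Bi t0 * dBj)).
Proof.
  intros hX hA hBi hBj hxi heta.
  auto_derive.
  - repeat split; first [ exact (ex_intro _ _ hX) | exact (ex_intro _ _ hA) | exact (ex_intro _ _ hBi) | exact (ex_intro _ _ hBj) | exact (ex_intro _ _ hxi) | exact (ex_intro _ _ heta) ].
  - replace (Derive (fun x : R => Xf x) t0) with dX by (symmetry; apply is_derive_unique; exact hX).
    replace (Derive (fun x : R => Aij x) t0) with dA by (symmetry; apply is_derive_unique; exact hA).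
    replace (Derive (fun x : R => Bi x) t0) with dBi by (symmetry; apply is_derive_unique; exact hBi).
    replace (Derive (fun x : R => Bj x) t0) with dBj by (symmetry; apply is_derive_unique; exact hBj).
    replace (Derive (fun x : R => xi eps x) (Xf t0)) with (dXi eps (Xf t0)) by (symmetry; apply is_derive_unique; exact hxi).
    replace (Derive (fun x : R => eta eps x) (Xf t0)) with (dEta eps (Xf t0)) by (symmetry; apply is_derive_unique; exact heta).
    ring.
Qed.
Lemma csum (G : idx -> idx -> R) dG bv i j : G X2 X1 = G X1 X2 ->
  sum2 (fun k => christoffel G dG k i j * bv k) = /2 * sum2 (fun l => bup G bv l * Tc dG l i j).
Proof. intros h. unfold christoffel, bup, Tc, sum2, inv2. rewrite h. ring. Qed.

Lemma bup_gt (g : idx -> idx -> R) bv X Y l :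
  g X2 X1 = g X1 X2 -> det2 g <> 0 -> X <> 0 -> X + Y * bnorm2 g bv <> 0 ->
  bup (fun i j => X * g i j + Y * bv i * bv j) bv l = / (X + Y * bnorm2 g bv) * bup g bv l.
Proof.
  intros hg hd hX hK.
  assert (hdet : det2 (fun i j => X * g i j + Y * bv i * bv j) = X * (X + Y * bnorm2 g bv) * det2 g).
  { unfold det2, bnorm2, bup, inv2, sum2. cbv beta. unfold det2. unfold det2 in hd. unfold det2; rewrite hg in *. field. exact hd. }
  assert (hd2 : det2 (fun i j => X * g i j + Y * bv i * bv j) <> 0).
  { rewrite hdet. repeat apply Rmult_integral_contrapositive_currified; auto. }
  assert (hK2 : (X + Y * bnorm2 g bv) * det2 g <> 0) by (apply Rmult_integral_contrapositive_currified; auto).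
  revert hdet hd2 hK hK2. unfold det2, bnorm2, bup, inv2, sum2. cbv beta. unfold det2. unfold det2 in hd. rewrite hg in *.
  intros hdet hd2 hK hK2.
  destruct l; field; repeat split; auto.
  all: intro E; apply hK2; rewrite <- E; field; exact hd.
Qed.
Lemma key_alg (g : idx -> idx -> R) (u bv : idx -> R) (dg : idx -> idx -> idx -> R)
  (dbv Rm s G : idx -> idx -> R) (tau eps X Y Xp Yp Q : R) :
  g X2 X1 = g X1 X2 ->
  (forall i j k, dg i j k = dg j i k) ->
  (forall i, bv i = sum2 (fun j => g i j * u j)) ->
  let x := sum2 (fun i => u i * bv i) in
  eps - x <> 0 ->
  s X1 X1 = 0 -> s X2 X2 = 0 -> s X2 X1 = - s X1 X2 ->
  (forall i j, G i j = /2 * sum2 (fun l => u l * Tc dg l i j)) ->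
  let sj := fun j => sum2 (fun i => u i * s i j) in
  (forall i j, Rm i j = 2 * tau * ((1 + 2 * eps * x) * g i j - eps * 3 * bv i * bv j)
       + 3 / (eps - x) * (bv i * sj j + bv j * sj i)) ->
  (forall i j, dbv i j = Rm i j + s i j + G i j) ->
  let dx := fun k => - sum2 (fun i => sum2 (fun j => u i * u j * dg i j k))
                     + 2 * sum2 (fun i => u i * dbv i k) in
  let dgt := fun i j k => Xp * dx k * g i j + X * dg i j k + Yp * dx k * bv i * bv j
                          + Y * (dbv i k * bv j + bv i * dbv j k) in
  forall i j,
  /2 * (dbv i j - /2 * Q * sum2 (fun l => u l * Tc dgt l i j)
        + (dbv j i - /2 * Q * sum2 (fun l => u l * Tc dgt l j i))) =
  ((1 - Q*Y*x)*2*tau*(1+2*eps*x) + 2*Q*tau*(1-eps*x)*x*Xp) * g i j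
  + ((1-Q*Y*x)*(-6*eps*tau) - 4*Q*tau*(1-eps*x)*(Xp+Yp*x) + 2*Q*tau*(1-eps*x)*x*Yp) * (bv i * bv j)
  + ((1-Q*Y*x)*3/(eps-x) - Q*(eps+2*x)/(eps-x)*(Xp+Yp*x) - Q*Y) * (bv i * sj j + bv j * sj i)
  + (1 - Q*(X+Y*x)) * G i j.
Proof.
  intros hg hdg hb x hex hs11 hs22 hs21 hG sj hR hdb dx dgt i j.
  unfold x, sum2 in hex. rewrite !hb in hex. unfold sum2 in hex. rewrite hg in hex.
  destruct i, j;
  unfold dgt, dx, Tc; unfold sum2;
  rewrite !hdb; rewrite !hR, !hG; unfold sj, Tc, x; unfold sum2;
  rewrite ?hs11, ?hs22, ?hs21;
  rewrite !(hdg X2 X1); rewrite !hb; unfold sum2; rewrite !hg;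
  field; exact hex.
Qed.

Definition gtf (eps : R) (g : idx -> idx -> R) (bv : idx -> R) : idx -> idx -> R :=
  fun i j => xi eps (bnorm2 g bv) * g i j + eta eps (bnorm2 g bv) * bv i * bv j.
Definition dgtf (eps : R) (g : idx -> idx -> R) (dg : idx -> idx -> idx -> R) (bv : idx -> R)
  (dbv : idx -> idx -> R) : idx -> idx -> idx -> R :=
  fun i j k => dXi eps (bnorm2 g bv) * dxf g dg bv dbv k * g i j + xi eps (bnorm2 g bv) * dg i j k
    + dEta eps (bnorm2 g bv) * dxf g dg bv dbv k * bv i * bv j
    + eta eps (bnorm2 g bv) * (dbv i k * bv j + bv i * dbv j k).

Lemma pt_main eps g dg bv dbv tau :
  g X2 X1 = g X1 X2 -> (forall i j k, dg i j k = dg j i k) -> det2 g <> 0 ->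
  (eps = 1 /\ 0 < bnorm2 g bv < 1) \/ (eps = -1 /\ 0 < bnorm2 g bv < 1/2) ->
  (forall i j, rr g dg bv dbv i j =
       2 * tau * ((1 + 2 * eps * bnorm2 g bv) * g i j - eps * 3 * bv i * bv j)
       + 3 / (eps - bnorm2 g bv) * (bv i * sj g dg bv dbv j + bv j * sj g dg bv dbv i)) ->
  (forall i j, rr (gtf eps g bv) (dgtf eps g dg bv dbv) bv dbv i j =
     2 * tau * (1 - eps * bnorm2 g bv) ^ 2 / Rpower (1 + 2 * eps * bnorm2 g bv) (5 / 2)
       * gtf eps g bv i j) /\
  bnorm2 (gtf eps g bv) bv = bnorm2 g bv / Rpower (1 + 2 * eps * bnorm2 g bv) (3 / 2).
Proof.
  intros hg hdg hdet hx hyp.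
  pose proof (scalar eps (bnorm2 g bv) tau hx) as HS. cbv zeta in HS.
  destruct HS as [hK [hX0 [hex [hA [hB hC]]]]].
  assert (hKpos : 0 < Rpower (1 + 2 * eps * bnorm2 g bv) (3/2)) by (unfold Rpower; apply exp_pos).
  assert (hK0 : xi eps (bnorm2 g bv) + eta eps (bnorm2 g bv) * bnorm2 g bv <> 0) by (rewrite hK; lra).
  assert (hbup : forall l, bup (gtf eps g bv) bv l =
     / (xi eps (bnorm2 g bv) + eta eps (bnorm2 g bv) * bnorm2 g bv) * bup g bv l).
  { intro l. unfold gtf. apply bup_gt; auto. }
  assert (hgs : gtf eps g bv X2 X1 = gtf eps g bv X1 X2) by (unfold gtf; rewrite hg; ring).
  assert (hb : forall i, bv i = sum2 (fun j => g i j * bup g bv j)).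
  { unfold det2 in hdet. rewrite hg in hdet.
    intro i; destruct i; unfold bup, inv2, sum2, det2; rewrite hg; field; exact hdet. }
  pose proof (key_alg g (bup g bv) bv dg dbv (rr g dg bv dbv) (ss g dg bv dbv)
    (fun i j => sum2 (fun k => christoffel g dg k i j * bv k)) tau eps
    (xi eps (bnorm2 g bv)) (eta eps (bnorm2 g bv)) (dXi eps (bnorm2 g bv)) (dEta eps (bnorm2 g bv))
    (/ (xi eps (bnorm2 g bv) + eta eps (bnorm2 g bv) * bnorm2 g bv)) hg hdg hb hex) as Hk.
  cbv zeta in Hk.
  change (sum2 (fun i => bup g bv i * bv i)) with (bnorm2 g bv) in Hk.
  specialize (Hk ltac:(unfold ss; ring) ltac:(unfold ss; ring) ltac:(unfold ss; ring)).
  specialize (Hk ltac:(intros i j; apply csum; exact hg)).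
  specialize (Hk hyp).
  assert (hdb : forall i j, dbv i j = rr g dg bv dbv i j + ss g dg bv dbv i j
     + sum2 (fun k => christoffel g dg k i j * bv k)).
  { intros i j. unfold rr, ss, covd. field. }
  specialize (Hk hdb).
  split.
  - intros i j.
    refine (eq_trans _ (eq_trans (Hk i j) _)).
    + unfold rr, covd. rewrite !csum by exact hgs. unfold sum2. rewrite !hbup.
      unfold dgtf, dxf, Tc, sum2. ring.
    + rewrite hA, hB, hC. rewrite Rinv_l by exact hK0. unfold gtf. ring.
  - unfold bnorm2 at 1. unfold sum2. rewrite !hbup. rewrite hK.
    unfold bnorm2, sum2. unfold Rdiv. ring.
Qed.

Lemma shift0 p k : shift p k 0 = p.
Proof. destruct p as [p1 p2]; destruct k; simpl; f_equal; ring. Qed.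

Lemma da_sym U a da : is_open U -> is_riemannian a U -> partials2 a da U ->
  forall i j k p, U p -> da i j k p = da j i k p.
Proof.
  intros hU hR hp i j k p Up.
  pose proof (proj2 (is_derive_Reals _ _ _) (hp i j k p Up)) as h1.
  pose proof (proj2 (is_derive_Reals _ _ _) (hp j i k p Up)) as h2.
  destruct (hU p Up) as [d [hd hq]].
  assert (HH : forall t : R, Rabs t < d -> a i j (shift p k t) = a j i (shift p k t)).
  { intros t ht. assert (Uq : U (shift p k t)).
    { apply hq; destruct k; cbn [shift fst snd].
      - replace (fst p + t - fst p) with t by ring. exact ht.
      - rewrite Rminus_diag, Rabs_R0. exact hd.
      - rewrite Rminus_diag, Rabs_R0. exact hd.
      - replace (snd p + t - snd p) with t by ring. exact ht. }
    destruct (hR _ Uq) as [hs _]. apply hs. }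
  assert (Hloc : locally 0 (fun t => a i j (shift p k t) = a j i (shift p k t))).
  { exists (mkposreal d hd). intros t ht. change (Rabs (t + - 0) < d) in ht.
    rewrite Ropp_0, Rplus_0_r in ht. apply HH. exact ht. }
  pose proof (is_derive_ext_loc _ _ _ _ Hloc h1) as h3.
  rewrite <- (is_derive_unique _ _ _ h3), <- (is_derive_unique _ _ _ h2). reflexivity.
Qed.

Lemma pd_facts U a b p : is_riemannian a U -> U p -> (b X1 p <> 0 \/ b X2 p <> 0) ->
  a X2 X1 p = a X1 X2 p /\ 0 < det2 (atp a p) /\ 0 < bnorm2 (atp a p) (batp b p).
Proof.
  intros hR Up hb0. destruct (hR p Up) as [hs hpos].
  assert (h21 : a X2 X1 p = a X1 X2 p) by apply hs.
  assert (h11 : 0 < a X1 X1 p).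
  { pose proof (hpos (fun i => match i with X1 => 1 | X2 => 0 end) (or_introl R1_neq_R0)) as H.
    unfold sum2 in H. simpl in H. lra. }
  assert (hdet : 0 < det2 (atp a p)).
  { assert (hv : (fun i => match i with X1 => - a X1 X2 p | X2 => a X1 X1 p end) X2 <> 0) by (simpl; lra).
    pose proof (hpos _ (or_intror hv)) as H. unfold sum2 in H. simpl in H.
    unfold det2, atp. rewrite h21 in *. nra. }
  split; [exact h21| split; [exact hdet|]].
  set (u := bup (atp a p) (batp b p)).
  assert (hd0 : det2 (atp a p) <> 0) by lra.
  assert (hb : forall i, b i p = sum2 (fun j => a i j p * u j)).
  { unfold det2, atp in hd0. rewrite h21 in hd0.
    intro i; destruct i; unfold u, bup, inv2, sum2, det2, atp, batp; rewrite h21; field; exact hd0. }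
  assert (hu : u X1 <> 0 \/ u X2 <> 0).
  { destruct (Req_dec (u X1) 0) as [e1|e1]; [|left; exact e1].
    destruct (Req_dec (u X2) 0) as [e2|e2]; [|right; exact e2].
    exfalso. rewrite (hb X1), (hb X2) in hb0. unfold sum2 in hb0. rewrite e1, e2 in hb0.
    destruct hb0 as [h|h]; apply h; ring. }
  pose proof (hpos u hu) as H.
  replace (bnorm2 (atp a p) (batp b p)) with (sum2 (fun i => sum2 (fun j => a i j p * u i * u j))).
  exact H.
  unfold bnorm2. fold u. unfold sum2. cbv beta delta [batp]. rewrite (hb X1), (hb X2). unfold sum2. rewrite h21. ring.
Qed.

Theorem mainTheorem15
  (U : pt -> Prop) (a : idx -> idx -> pt -> R) (da : idx -> idx -> idx -> pt -> R)
  (b : idx -> pt -> R) (db : idx -> idx -> pt -> R) (tau : pt -> R) (eps : R) :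
  is_open U ->
  is_riemannian a U ->
  partials2 a da U ->
  partials1 b db U ->
  (forall p, U p -> b X1 p <> 0 \/ b X2 p <> 0) ->
  ((eps = 1 /\ forall p, U p -> bnorm2 (atp a p) (batp b p) < 1) \/
   (eps = -1 /\ forall p, U p -> bnorm2 (atp a p) (batp b p) < 1 / 2)) ->
  (forall p, U p -> forall i j : idx,
     let g := atp a p in let dg := datp da p in
     let bv := batp b p in let dbv := dbatp db p in
     let b2 := bnorm2 g bv in
     rr g dg bv dbv i j =
       2 * tau p * ((1 + 2 * eps * b2) * g i j - eps * 3 * bv i * bv j)
       + 3 / (eps - b2) * (bv i * sj g dg bv dbv j + bv j * sj g dg bv dbv i)) ->
  exists dat : idx -> idx -> idx -> pt -> R,
    partials2 (atilde eps a b) dat U /\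
    forall p, U p ->
      let b2 := bnorm2 (atp a p) (batp b p) in
      let gt := atp (atilde eps a b) p in
      (forall i j : idx,
         rr gt (datp dat p) (batp b p) (dbatp db p) i j =
           2 * tau p * (1 - eps * b2) ^ 2 / Rpower (1 + 2 * eps * b2) (5 / 2) * gt i j) /\
      bnorm2 gt (batp b p) = b2 / Rpower (1 + 2 * eps * b2) (3 / 2).
Proof.
  intros hU hR hpa hpb hb0 heps hrr.
  assert (hepsx : forall p, U p -> (eps = 1 /\ 0 < bnorm2 (atp a p) (batp b p) < 1) \/
                 (eps = -1 /\ 0 < bnorm2 (atp a p) (batp b p) < 1/2)).
  { intros p Up. destruct (pd_facts U a b p hR Up (hb0 p Up)) as [_ [_ hx]].
    destruct heps as [[-> h]|[-> h]]; [left|right]; split; auto. }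
  exists (fun i j k p => dgtf eps (atp a p) (datp da p) (batp b p) (dbatp db p) i j k).
  split.
  - intros i j k p Up. unfold has_partial. apply is_derive_Reals.
    destruct (pd_facts U a b p hR Up (hb0 p Up)) as [h21 [hdet hx]].
    assert (hy : 0 < 1 + 2 * eps * bnorm2 (atp a p) (batp b p)).
    { destruct (hepsx p Up) as [[-> h]|[-> h]]; lra. }
    assert (hA : forall i j, is_derive (fun t => a i j (shift p k t)) 0 (da i j k p)).
    { intros i' j'. apply is_derive_Reals. apply hpa. exact Up. }
    assert (hB : forall i, is_derive (fun t => b i (shift p k t)) 0 (db i k p)).
    { intros i'. apply is_derive_Reals. apply hpb. exact Up. }
    pose proof (deriv_bnorm (fun i j t => a i j (shift p k t)) (fun i t => b i (shift p k t))
      (fun i j k => da i j k p) (fun i k => db i k p) k 0 hA hB) as hX.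
    cbv beta in hX. rewrite !shift0 in hX.
    specialize (hX h21 ltac:(apply Rgt_not_eq; exact hdet)).
    pose proof (deriv_at eps (fun t => bnorm2 (atp a (shift p k t)) (batp b (shift p k t)))
      (fun t => a i j (shift p k t)) (fun t => b i (shift p k t)) (fun t => b j (shift p k t))
      _ _ _ _ 0 hX (hA i j) (hB i) (hB j)) as H.
    cbv beta in H. rewrite !shift0 in H.
    specialize (H (D_xi _ _ hy) (D_eta _ _ hy ltac:(apply Rgt_not_eq; exact hx))).
    exact H.
  - intros p Up. cbv zeta.
    destruct (pd_facts U a b p hR Up (hb0 p Up)) as [h21 [hdet hx]].
    apply (pt_main eps (atp a p) (datp da p) (batp b p) (dbatp db p) (tau p)).
    + exact h21.
    + intros i j k. exact (da_sym U a da hU hR hpa i j k p Up).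
    + apply Rgt_not_eq; exact hdet.
    + exact (hepsx p Up).
    + intros i j. exact (hrr p Up i j).
Qed.
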